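(* Let $n\geq 2$ and let $L_n$ be the graph of linear $[n]$-phenylene (defined in the context). Then the base polynomial counting distances between pairs consisting of a degree-2 vertex and a degree-3 vertex of $L_n$ is \begin{eqnarray*} H^{2,3}_{b}(L_{n}) &=& 2(2n-2)x+4\sum_{k=2}^{n-1}(n-k+1)x^{3k-2}+4\sum_{k=1}^{n-1}(2n-2k+1)x^{3k-1}\\ &&+4\sum_{k=1}^{n-1}(n-k+2)x^{3k}+4x^{3n-2}. \end{eqnarray*}
   Context: All graphs are finite, simple and connected; $d(u,v)$ denotes the shortest-path distance and $d_u$ the degree of a vertex $u$. For a graph $G$ and degrees $p\le q$, the base polynomial is $H^{p,q}_{b}(G)=\sum x^{d(u,v)}$, where the sum runs over all unordered pairs $\{u,v\}$ of distinct vertices of $G$ such that one of $u,v$ has degree $p$ and the other has degree $q$. Linear $[n]$-phenylene $L_n$: take $n$ hexagons $H_1,\dots,H_n$; hexagon $H_i$ is the 6-cycle $a_i b_i c_i d_i e_i f_i a_i$. For each $i=1,\dots,n-1$ add the two edges $b_i f_{i+1}$ and $c_i e_{i+1}$, so that $b_i c_i e_{i+1} f_{i+1}$ is a 4-cycle joining consecutive hexagons. Thus $L_n$ has $6n$ vertices, $2n+4$ of degree 2 and $4n-4$ of degree 3. *)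

(* Defs.v *)
From mathcomp Require Import all_boot all_order all_algebra.
Set Implicit Arguments. Unset Strict Implicit. Unset Printing Implicit Defensive.
Import GRing.Theory.
Local Open Scope ring_scope.

(* A simple graph on a finite type T is given by a (symmetric, irreflexive)
   adjacency relation e : rel T. *)
Section Graph.
Variables (T : finType) (e : rel T).

Definition deg (u : T) : nat := #|[set v | e u v]|.

Fixpoint ball (k : nat) (u : T) : {set T} :=
  if k is k'.+1 then ball k' u :|: [set w | [exists v in ball k' u, e v w]]
  else [set u].

(* shortest-path distance: least k with v within k steps of u
   (the graphs considered are connected, so such k < #|T| exists) *)
Definition dist (u v : T) : nat := find (fun k => v \in ball k u) (iota 0 #|T|).

Definition base_poly (p q : nat) : {poly int} :=
  \sum_(uv : T * T | (enum_rank uv.1 < enum_rank uv.2)%N &&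
        (((deg uv.1 == p) && (deg uv.2 == q)) ||
         ((deg uv.1 == q) && (deg uv.2 == p))))
    'X^(dist uv.1 uv.2).
End Graph.

(* Linear [n]-phenylene: vertex (i, j) with j = 0..5 standing for
   a_i, b_i, c_i, d_i, e_i, f_i of hexagon H_{i+1}. *)
Definition phen_adj (n : nat) : rel ('I_n * 'I_6) :=
  fun u v =>
    let: (i, j) := u in let: (i', j') := v in
    [|| (i == i') && ((j' == (j + 1) %% 6 :> nat) || (j == (j' + 1) %% 6 :> nat)),
        (* b_i f_{i+1} *)
        (i'.+1 == i :> nat) && (j' == 1 :> nat) && (j == 5 :> nat),
        (i.+1 == i' :> nat) && (j == 1 :> nat) && (j' == 5 :> nat),
        (* c_i e_{i+1} *)
        (i'.+1 == i :> nat) && (j' == 2 :> nat) && (j == 4 :> nat)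
      | (i.+1 == i' :> nat) && (j == 2 :> nat) && (j' == 4 :> nat)]%N.
Arguments phen_adj : clear implicits.

(* Main.v *)
Require Import Defs.
From mathcomp Require Import all_boot all_order all_algebra zify ring.
Import GRing.Theory.
Set Implicit Arguments. Unset Strict Implicit.
Definition pos (j : nat) : nat := if (j == 0) || (j == 3) then 1 else if (j == 1) || (j == 2) then 2 else 0.
Definition row (j : nat) : bool := (1 < j) && (j < 5).
Definition adjC (x : nat) (r : bool) (y : nat) (s : bool) : bool :=
  ((r == s) && ((x.+1 == y) || (y.+1 == x))) || ((r != s) && (x == y) && (x %% 3 != 1)).
Definition XX n (u : 'I_n * 'I_6) : nat := 3 * u.1 + pos u.2.
Definition RR n (u : 'I_n * 'I_6) : bool := row u.2.
Lemma adjE n (u v : 'I_n * 'I_6) : phen_adj n u v = adjC (XX u) (RR u) (XX v) (RR v).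
Proof.
have E : forall (a b : 'I_n), (a == b) = (val a == val b) by [].
case: u v => [i [j hj]] [i' [j' hj']]; rewrite /phen_adj /XX /RR /adjC /= E.
case: i i' => [i hi] [i' hi'] /=.
do 6?[case: j hj => [|j] hj]; last by [].
all: do 6?[case: j' hj' => [|j'] hj']; last by [].
all: rewrite /pos /row /=.
all: lia.
Qed.
Definition Dc (x : nat) (r : bool) (y : nat) (s : bool) : nat :=
  (x - y) + (y - x) + (r != s) + 2 * ((r != s) && (x == y) && (x %% 3 == 1)).

Lemma Dc0 x r y s : (Dc x r y s == 0) = (x == y) && (r == s).
Proof. case: r; case: s; rewrite /Dc /=; lia. Qed.

Lemma Dc_sym x r y s : Dc x r y s = Dc y s x r.
Proof. case: r; case: s; rewrite /Dc /=; lia. Qed.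

Lemma Dc_adj x r y s z t : adjC y s z t -> Dc x r z t <= (Dc x r y s).+1.
Proof. case: r; case: s; case: t; rewrite /Dc /adjC /=; lia. Qed.

Lemma Dc_pred n x r z t : x < 3 * n -> z < 3 * n -> 0 < Dc x r z t ->
  exists y s, [/\ y < 3 * n, adjC y s z t & (Dc x r y s).+1 = Dc x r z t].
Proof.
move=> hx hz hD.
case: (ltngtP x z) => hxz.
- case: (boolP (r == t)) => hrt.
  + exists z.-1, t; rewrite /Dc /adjC; split; [lia|..]; move: hrt hD; case: r; case: t => //=; lia.
  + case: (boolP (z %% 3 == 1)) => hz3.
    * exists z.-1, t; rewrite /Dc /adjC; split; [lia|..]; move: hrt hz3 hD; case: r; case: t => //=; lia.
    * exists z, r; rewrite /Dc /adjC; split; [lia|..]; move: hrt hz3 hD; case: r; case: t => //=; lia.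
- case: (boolP (r == t)) => hrt.
  + exists z.+1, t; rewrite /Dc /adjC; split; [lia|..]; move: hrt hD; case: r; case: t => //=; lia.
  + case: (boolP (z %% 3 == 1)) => hz3.
    * exists z.+1, t; rewrite /Dc /adjC; split; [lia|..]; move: hrt hz3 hD; case: r; case: t => //=; lia.
    * exists z, r; rewrite /Dc /adjC; split; [lia|..]; move: hrt hz3 hD; case: r; case: t => //=; lia.
- subst z; case: (boolP (r == t)) => hrt.
  + move: hD; rewrite lt0n Dc0 hrt eqxx //.
  + case: (boolP (x %% 3 == 1)) => hz3.
    * exists x.+1, t; rewrite /Dc /adjC; split; [lia|move: hrt hz3 hD; case: r; case: t => //=; lia..].
    * exists x, r; rewrite /Dc /adjC; split; [lia|..]; move: hrt hz3 hD; case: r; case: t => //=; lia.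
Qed.
Lemma ball_char (T : finType) (e : rel T) (D : T -> T -> nat) (u : T) :
  (forall v, (D u v == 0) = (v == u)) ->
  (forall v w, e v w -> D u w <= (D u v).+1) ->
  (forall w, 0 < D u w -> exists v, e v w /\ (D u v).+1 = D u w) ->
  forall k, ball e k u = [set v | D u v <= k].
Proof.
move=> H0 H1 H2; elim=> [|k IH] /=.
  by apply/setP => v; rewrite !inE leqn0 H0.
apply/setP => w; rewrite IH !inE; apply/idP/idP.
- case/orP => [h|/existsP [v /andP [hv hvw]]]; first by apply: leqW.
  by apply: leq_trans (H1 _ _ hvw) _; rewrite inE in hv.
- move=> h; case: (leqP (D u w) k) => [//|hk]; apply/orP; right.
  have [v [hvw hv]] := H2 w (leq_ltn_trans (leq0n _) hk).
  apply/existsP; exists v; rewrite inE hvw andbT; lia.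
Qed.

Lemma find_leq d N m : m <= d < m + N -> find (fun k => d <= k) (iota m N) = d - m.
Proof.
elim: N m => [|N IH] m /=; first lia.
move=> h; case: (leqP d m) => hdm; first lia.
rewrite IH; lia.
Qed.

Lemma dist_char (T : finType) (e : rel T) (D : T -> T -> nat) (u v : T) :
  (forall k, ball e k u = [set v | D u v <= k]) -> D u v < #|T| -> dist e u v = D u v.
Proof.
move=> hb hlt; rewrite /dist.
rewrite (eq_find (a2 := fun k => D u v <= k)); last by move=> k; rewrite hb inE.
rewrite find_leq; lia.
Qed.
Section Reindex.
Variables (R : Type) (idx : R) (op : Monoid.com_law idx).

Lemma sum3 n (G : nat -> R) :
  \big[op/idx]_(0 <= x < 3 * n) G x = \big[op/idx]_(i < n) (op (op (G (3 * i)) (G (3 * i + 1))) (G (3 * i + 2))).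
Proof.
elim: n => [|n IH]; first by rewrite muln0 big_geq // big_ord0.
rewrite big_ord_recr /= -IH (_ : 3 * n.+1 = (3 * n).+1.+1.+1); last by lia.
rewrite !big_nat_recr //= ?Monoid.mulmA; try lia.
by rewrite addn1 addn2.
Qed.

Lemma reindexT n (F : nat -> bool -> R) :
  \big[op/idx]_(v : 'I_n * 'I_6) F (XX v) (RR v) =
  \big[op/idx]_(0 <= x < 3 * n) (op (F x false) (F x true)).
Proof.
rewrite sum3 -(pair_bigA _ (fun i j => F (XX (i, j)) (RR (i, j)))) /=; apply: eq_bigr => i _.
rewrite !big_ord_recl big_ord0 /XX /RR /= /pos /row /= Monoid.mulm1 !Monoid.mulmA.
rewrite /bump /= Monoid.mulm1.
by rewrite (ACl (6*5*1*4*2*3)).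
Qed.
End Reindex.

Lemma pos_lt j : j < 6 -> pos j < 3.
Proof. by do 6?[case: j => [|j]]. Qed.

Lemma XX_lt n (u : 'I_n * 'I_6) : XX u < 3 * n.
Proof. case: u => [[i hi] [j hj]]; rewrite /XX /=; have := pos_lt hj; lia. Qed.

Lemma XX_inj n (u v : 'I_n * 'I_6) : XX u = XX v -> RR u = RR v -> u = v.
Proof.
case: u v => [[i hi] [j hj]] [[i' hi'] [j' hj']]; rewrite /XX /RR /= => hX hR.
have h1 := pos_lt hj; have h2 := pos_lt hj'.
have ei : i = i' by lia.
have ep : pos j = pos j' by lia.
subst i'; have -> : hi' = hi by apply: bool_irrelevance.
have ej : j = j'.
  move: ep hR hj hj'; rewrite /pos /row.
  clear h1 h2 hX; do 6?[case: j => [|j]]; do 6?[case: j' => [|j']]; move=> /= ep hR hj hj'; try congruence; lia.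
subst j'; have -> : hj' = hj by apply: bool_irrelevance.
by [].
Qed.

Definition jfun (m : nat) (r : bool) : nat :=
  if m == 0 then (if r then 4 else 5) else if m == 1 then (if r then 3 else 0) else (if r then 2 else 1).
Lemma jfun_lt m r : jfun m r < 6.
Proof. by rewrite /jfun; case: r; case: ifP => _ //; case: ifP. Qed.

Lemma XX_surj n x r : x < 3 * n -> exists v : 'I_n * 'I_6, XX v = x /\ RR v = r.
Proof.
move=> hx; have hi : x %/ 3 < n by lia.
have hm : x %% 3 < 3 by lia.
exists (Ordinal hi, Ordinal (jfun_lt (x %% 3) r)); rewrite /XX /RR /=.
have hx3 : x = 3 * (x %/ 3) + x %% 3 by lia.
move: hm hx3; set q := x %/ 3; set m := x %% 3 => hm hx3.
rewrite /jfun; case: m hm hx3 => [|[|[|m]]] //= _ hx3; case: r => /=; split => //; lia.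
Qed.

Definition DD n (u v : 'I_n * 'I_6) := Dc (XX u) (RR u) (XX v) (RR v).

Lemma ball_phen n (u : 'I_n * 'I_6) k : ball (phen_adj n) k u = [set v | DD u v <= k].
Proof.
apply: ball_char.
- move=> v; rewrite /DD Dc0; apply/idP/idP.
  + by case/andP => /eqP h1 /eqP h2; apply/eqP; apply: XX_inj.
  + by move/eqP->; rewrite !eqxx.
- by move=> v w; rewrite adjE /DD; apply: Dc_adj.
- move=> w hw.
  have [y [s [hy ha hd]]] := Dc_pred (XX_lt u) (XX_lt w) hw.
  have [v [hv1 hv2]] := XX_surj s hy.
  by exists v; rewrite adjE /DD hv1 hv2.
Qed.

Lemma dist_phen n (u v : 'I_n * 'I_6) : dist (phen_adj n) u v = DD u v.
Proof.
apply: dist_char; first by move=> k; apply: ball_phen.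
rewrite card_prod !card_ord /DD /Dc.
have := XX_lt u; have := XX_lt v.
case: (RR u); case: (RR v) => /=; lia.
Qed.

Definition d3c n x := (x %% 3 != 1) && (0 < x) && (x < 3 * n - 1).

Lemma sum_ind N a (c : bool) : \sum_(0 <= x < N) (((x == a) && c) : nat) = ((a < N) && c).
Proof.
elim: N => [|N IH]; first by rewrite big_geq.
rewrite big_nat_recr //= IH; move: IH; case: c => /= _; lia.
Qed.

Lemma deg_phen n (u : 'I_n * 'I_6) : deg (phen_adj n) u = 2 + d3c n (XX u).
Proof.
rewrite /deg -sum1_card big_mkcond /=.
rewrite (eq_bigr (fun v : 'I_n * 'I_6 => nat_of_bool (adjC (XX u) (RR u) (XX v) (RR v)))); last first.
  by move=> v _; rewrite inE adjE; case: adjC.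
rewrite (reindexT addn n (fun x r => nat_of_bool (adjC (XX u) (RR u) x r))) /=.
have hu := XX_lt u.
rewrite (eq_bigr (fun x => ((x == (XX u).-1) && (0 < XX u) : nat) + ((x == (XX u).+1) && true : nat)
    + ((x == XX u) && (XX u %% 3 != 1) : nat))); last first.
  move=> x _; rewrite /adjC; case: (RR u) => /=; lia.
rewrite !big_split /= !sum_ind /d3c; lia.
Qed.
Local Open Scope ring_scope.
Lemma aux (x y p q : nat) (X : {poly int}) : p != q ->
  (if (x==p)&&(y==q) || (x==q)&&(y==p) then X else 0) = (if (x==p)&&(y==q) then X else 0) + (if (y==p)&&(x==q) then X else 0).
Proof.
move=> h; have [hxp|hxp] := eqVneq x p; have [hyq|hyq] := eqVneq y q; have [hxq|hxq] := eqVneq x q; have [hyp|hyp] := eqVneq y p; rewrite /= ?addr0 ?add0r //.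
all: exfalso; lia.
Qed.

Lemma base_split (T : finType) (e : rel T) (p q : nat) : p != q ->
  (forall u v, dist e u v = dist e v u) ->
  base_poly e p q = \sum_(u : T) \sum_(v : T)
     (if (deg e u == p) && (deg e v == q) then 'X^(dist e u v) else 0).
Proof.
move=> hpq hsym.
rewrite pair_bigA /=.
set G := fun uv : T * T => if (deg e uv.1 == p) && (deg e uv.2 == q) then ('X^(dist e uv.1 uv.2) : {poly int}) else 0.
rewrite (eq_bigr (fun uv => (if (enum_rank uv.1 < enum_rank uv.2)%N then G uv else 0)
                      + (if ~~ (enum_rank uv.1 < enum_rank uv.2)%N then G uv else 0))); last first.
  by move=> uv _; case: (enum_rank uv.1 < enum_rank uv.2)%N; rewrite /= ?addr0 ?add0r.
rewrite big_split /=.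
have sw : injective (fun uv : T * T => (uv.2, uv.1)) by move=> [a b] [c d] [-> ->].
rewrite [X in _ = _ + X](reindex_inj sw) /= -big_split /= /base_poly big_mkcond /=.
apply: eq_bigr => [[a b]] _ /=; rewrite /G /= (hsym b a).
case: (ltngtP (enum_rank a) (enum_rank b)) => h /=.
- exact: aux.
- by rewrite addr0.
- have eab : a = b by apply: enum_rank_inj; apply: val_inj.
  subst b; rewrite add0r.
  case: ifP => // /andP [/eqP h1 /eqP h2]; exfalso; lia.
Qed.

Definition Fc n x r y s : {poly int} := if ~~ d3c n x && d3c n y then 'X^(Dc x r y s) else 0.
Definition Qsum n : {poly int} :=
  \sum_(0 <= x < (3 * n)%N) \sum_(0 <= y < (3 * n)%N) (if ~~ d3c n x && d3c n y then 'X^(x - y + (y - x))%N else 0).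

Lemma base_Q n : base_poly (phen_adj n) 2 3 = (2%:R + 2%:R * 'X) * Qsum n.
Proof.
rewrite base_split //; last by move=> u v; rewrite !dist_phen /DD Dc_sym.
rewrite (eq_bigr (fun u => \sum_(v : 'I_n * 'I_6) Fc n (XX u) (RR u) (XX v) (RR v))); last first.
  move=> u _; apply: eq_bigr => v _; rewrite !deg_phen dist_phen /Fc /DD.
  by case: (d3c n (XX u)); case: (d3c n (XX v)).
rewrite (eq_bigr (fun u => \sum_(0 <= y < (3 * n)%N) (Fc n (XX u) (RR u) y false + Fc n (XX u) (RR u) y true))); last first.
  by move=> u _; rewrite (reindexT _ n (fun y s => Fc n (XX u) (RR u) y s)).
rewrite (reindexT _ n (fun x r => \sum_(0 <= y < (3 * n)%N) (Fc n x r y false + Fc n x r y true))).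
rewrite /Qsum mulr_sumr; apply: eq_bigr => x _; rewrite -big_split mulr_sumr /=; apply: eq_bigr => y _.
rewrite /Fc; case hx: (d3c n x); case hy: (d3c n y); rewrite /= ?addr0 ?mulr0 //.
have hne : (x == y) = false by apply/negbTE; apply/eqP => exy; move: hx hy; rewrite exy => ->.
rewrite /Dc /= hne /= !muln0 !addn0 !addn1 !exprS.
ring.
Qed.
Definition P m : {poly int} := \sum_(0 <= s < m) ('X^(3 * s + 1) + 'X^(3 * s + 2)).

Lemma split_at (F : nat -> {poly int}) N x : (x < N)%N ->
  \sum_(0 <= y < N) F y = \sum_(0 <= t < x) F (x - t.+1)%N + F x + \sum_(0 <= t < N - x.+1) F (x + t.+1)%N.
Proof.
elim: N => [|N IH] hx; first lia.
case: (ltngtP x N) => h.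
- rewrite big_nat_recr //= IH // (_ : (N.+1 - x.+1 = (N - x.+1).+1)%N); last lia.
  rewrite [in RHS]big_nat_recr //= (_ : (x + (N - x.+1).+1 = N)%N) ?addrA //; lia.
- lia.
- subst x; rewrite big_nat_recr //= subnn [X in _ = _ + X]big_geq // addr0.
  by rewrite big_nat_rev /=; congr (_ + _); apply: eq_bigr => t _; rewrite add0n.
Qed.

Lemma cutoff (a m k : nat) :
  \sum_(0 <= t < 3 * m + k) (if ((t %% 3 != a) && (t < 3 * m))%N then 'X^(t.+1) else 0 : {poly int})
  = \sum_(0 <= t < 3 * m) (if (t %% 3 != a)%N then 'X^(t.+1) else 0).
Proof.
rewrite (big_cat_nat _ (n := 3 * m)) //=; last lia.
have -> : \sum_(3 * m <= t < 3 * m + k) (if ((t %% 3 != a) && (t < 3 * m))%N then 'X^(t.+1) else 0 : {poly int}) = 0.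
  rewrite big_nat_cond big1 //; move=> t; rewrite andbT => ht; rewrite ifF //; lia.
rewrite addr0.
by apply: eq_big_nat => t /andP [_ ht]; rewrite ht andbT.
Qed.

Lemma sum3n (G : nat -> {poly int}) n :
  \sum_(0 <= x < 3 * n) G x = \sum_(0 <= i < n) (G (3 * i)%N + G (3 * i + 1)%N + G (3 * i + 2)%N).
Proof. by rewrite sum3 big_mkord. Qed.

Lemma Pm2 m : \sum_(0 <= t < 3 * m) (if (t %% 3 != 2)%N then 'X^(t.+1) else 0 : {poly int}) = P m.
Proof.
rewrite sum3n /P; apply: eq_bigr => s _.
rewrite (_ : (3 * s) %% 3 = 0)%N; last lia.
rewrite (_ : (3 * s + 1) %% 3 = 1)%N; last lia.
rewrite (_ : (3 * s + 2) %% 3 = 2)%N; last lia.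
rewrite /= addr0; congr ('X^_ + 'X^_); lia.
Qed.

Lemma Pm0 m : \sum_(0 <= t < 3 * m) (if (t %% 3 != 0)%N then 'X^(t.+1) else 0 : {poly int}) = 'X * P m.
Proof.
rewrite sum3n /P mulr_sumr; apply: eq_bigr => s _.
rewrite (_ : (3 * s) %% 3 = 0)%N; last lia.
rewrite (_ : (3 * s + 1) %% 3 = 1)%N; last lia.
rewrite (_ : (3 * s + 2) %% 3 = 2)%N; last lia.
rewrite /= add0r mulrDr -!exprS; congr ('X^_ + 'X^_); lia.
Qed.

Definition Hx n x : {poly int} :=
  \sum_(0 <= y < (3 * n)%N) (if ~~ d3c n x && d3c n y then 'X^(x - y + (y - x))%N else 0).

Lemma H0 n i : (i < n)%N -> Hx n (3 * i) = if i == 0%N then 'X * P n.-1 else 0.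
Proof.
move=> hi; rewrite /Hx; case: eqP => [->|hi0].
- rewrite muln0 (split_at _ (x := 0)) //=; last lia.
  rewrite big_geq // !add0r.
  rewrite (_ : (3 * n - 1 = 3 * n.-1 + 2)%N); last lia.
  rewrite -Pm0 -(cutoff _ _ 2); apply: eq_big_nat => t ht.
  rewrite (_ : (0 - (0 + t.+1) + (0 + t.+1 - 0) = t.+1)%N); last lia.
  congr (if _ then _ else _); rewrite /d3c; lia.
- rewrite big1 // => y _; rewrite ifF //; rewrite /d3c; lia.
Qed.

Lemma H1 n i : (i < n)%N -> Hx n (3 * i + 1) = P i + P (n - i.+1).
Proof.
move=> hi; rewrite /Hx (split_at _ (x := 3 * i + 1)); last lia.
have hx : d3c n (3 * i + 1) = false by rewrite /d3c; lia.
rewrite hx /= addr0.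
rewrite (_ : (3 * n - (3 * i + 1).+1 = 3 * (n - i.+1) + 1)%N); last lia.
congr (_ + _).
- rewrite -Pm2 -[in RHS](cutoff _ _ 1) big_nat [in RHS]big_nat; apply: eq_bigr => t ht.
  rewrite (_ : (3 * i + 1 - (3 * i + 1 - t.+1) + (3 * i + 1 - t.+1 - (3 * i + 1)) = t.+1)%N); last lia.
  congr (if _ then _ else _); rewrite /d3c; lia.
- rewrite -Pm2 -(cutoff _ _ 1); apply: eq_big_nat => t ht.
  rewrite (_ : (3 * i + 1 - (3 * i + 1 + t.+1) + (3 * i + 1 + t.+1 - (3 * i + 1)) = t.+1)%N); last lia.
  congr (if _ then _ else _); rewrite /d3c; lia.
Qed.

Lemma H2 n i : (i < n)%N -> Hx n (3 * i + 2) = if i == n.-1 then 'X * P n.-1 else 0.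
Proof.
move=> hi; rewrite /Hx; case: eqP => [ei|hi0].
- rewrite (split_at _ (x := 3 * i + 2)); last lia.
  rewrite (_ : (3 * n - (3 * i + 2).+1 = 0)%N); last lia.
  have hx : d3c n (3 * i + 2) = false by rewrite /d3c; lia.
  rewrite [X in _ + X]big_geq // addr0 hx /= addr0.
  rewrite (_ : (3 * i + 2 = 3 * n.-1 + 2)%N); last lia.
  rewrite -Pm0 -(cutoff _ _ 2); apply: eq_big_nat => t ht.
  rewrite (_ : (3 * n.-1 + 2 - (3 * n.-1 + 2 - t.+1) + (3 * n.-1 + 2 - t.+1 - (3 * n.-1 + 2)) = t.+1)%N); last lia.
  congr (if _ then _ else _); rewrite /d3c; lia.
- rewrite big1 // => y _; rewrite ifF //; rewrite /d3c; lia.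
Qed.

Lemma sum_if1 n a (A : {poly int}) : (a < n)%N -> \sum_(0 <= i < n) (if i == a then A else 0) = A.
Proof.
elim: n => [|n IH] ha; first lia.
rewrite big_nat_recr //=; case: (ltngtP a n) => h.
- by rewrite IH //= addr0.
- lia.
- subst a; rewrite /= big1_seq ?add0r // => i; rewrite mem_iota => hi; rewrite ifF //; apply/eqP; lia.
Qed.

Lemma Q_eq n : (0 < n)%N -> Qsum n = 2%:R * \sum_(0 <= i < n) P i + 2%:R * ('X * P n.-1).
Proof.
move=> hn; rewrite /Qsum (eq_bigr (fun x => Hx n x)) // sum3n.
rewrite (eq_big_nat _ _ (F2 := fun i => ((if i == 0%N then 'X * P n.-1 else 0) + (P i + P (n - i.+1)%N))
   + (if i == n.-1 then 'X * P n.-1 else 0))); last first.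
  by move=> i /andP [_ hi]; rewrite H0 // H1 // H2.
rewrite !big_split /= !sum_if1 //; last lia.
rewrite [\sum_(0 <= i < n) P (n - i.+1)%N]big_nat_rev /=.
have -> : \sum_(0 <= i < n) P (n - (0 + n - i.+1).+1)%N = \sum_(0 <= i < n) P i.
  by apply: eq_big_nat => i hi; congr P; lia.
ring.
Qed.
Lemma sumP m : \sum_(0 <= i < m) P i = \sum_(0 <= s < m) (m - s.+1)%N%:R * ('X^(3 * s + 1) + 'X^(3 * s + 2)).
Proof.
elim: m => [|m IH]; first by rewrite !big_geq.
rewrite big_nat_recr //= IH [in RHS]big_nat_recr //= subnn mul0r addr0 /P -big_split /=.
apply: eq_big_nat => s /andP [_ hs].
rewrite (_ : (m.+1 - s.+1 = (m - s.+1) + 1)%N); last lia.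
by rewrite natrD mulrDl mul1r.
Qed.

Lemma sc (k : nat) (q : {poly int}) : k%:R *: q = k%:R * q.
Proof. by rewrite scaler_nat mulr_natl. Qed.

Lemma shift a b (F : nat -> {poly int}) : \sum_(a <= k < b) F k = \sum_(0 <= s < b - a) F (s + a)%N.
Proof. by rewrite -{1}[a]add0n big_addn. Qed.

Definition Z1 p s : {poly int} := (4 * (p.+1 - s))%N%:R * 'X^(3 * s + 1).
Definition Z2 p s : {poly int} := (4 * (2 * (p.+1 - s) + 1))%N%:R * 'X^(3 * s + 2).
Definition Z3 p s : {poly int} := (4 * (p.+1 - s + 2))%N%:R * 'X^(3 * s + 3).
Definition Z4 (s : nat) : {poly int} := 4%:R * 'X^(3 * s + 4).

Lemma LHS_Z p :
  (2%:R + 2%:R * 'X) * (2%:R * \sum_(0 <= i < p.+2) P i + 2%:R * ('X * P p.+1))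
  = \sum_(0 <= s < p.+1) (Z1 p s + Z2 p s + Z3 p s + Z4 s).
Proof.
rewrite sumP big_nat_recr //= subnn mul0r addr0 /P.
rewrite mulr_sumr !mulr_sumr -big_split mulr_sumr; apply: eq_bigr => s _.
rewrite /= /Z1 /Z2 /Z3 /Z4 subSS !exprD. ring.
Qed.

Lemma RHS_Z p :
    (2 * (2 * p.+2 - 2))%N%:R *: 'X
    + \sum_(2 <= k < p.+2) (4 * (p.+2 - k + 1))%N%:R *: 'X^(3 * k - 2)
    + \sum_(1 <= k < p.+2) (4 * (2 * p.+2 - 2 * k + 1))%N%:R *: 'X^(3 * k - 1)
    + \sum_(1 <= k < p.+2) (4 * (p.+2 - k + 2))%N%:R *: 'X^(3 * k)
    + 4%:R *: 'X^(3 * p.+2 - 2)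
  = \sum_(0 <= s < p.+1) (Z1 p s + Z2 p s + Z3 p s + Z4 s) :> {poly int}.
Proof.
have hC : \sum_(1 <= k < p.+2) (4 * (2 * p.+2 - 2 * k + 1))%N%:R *: 'X^(3 * k - 1)
          = \sum_(0 <= s < p.+1) Z2 p s :> {poly int}.
  rewrite [LHS]shift (_ : (p.+2 - 1 = p.+1)%N); last lia.
  apply: eq_big_nat => s hs; rewrite sc /Z2; congr (_%:R * 'X^_); lia.
have hD : \sum_(1 <= k < p.+2) (4 * (p.+2 - k + 2))%N%:R *: 'X^(3 * k)
          = \sum_(0 <= s < p.+1) Z3 p s :> {poly int}.
  rewrite [LHS]shift (_ : (p.+2 - 1 = p.+1)%N); last lia.
  apply: eq_big_nat => s hs; rewrite sc /Z3; congr (_%:R * 'X^_); lia.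
have hB : \sum_(2 <= k < p.+2) (4 * (p.+2 - k + 1))%N%:R *: 'X^(3 * k - 2)
          = \sum_(0 <= s < p) (Z1 p s.+1 + Z4 s) :> {poly int}.
  rewrite [LHS]shift (_ : (p.+2 - 2 = p)%N); last lia.
  apply: eq_big_nat => s hs; rewrite sc /Z1 /Z4.
  rewrite (_ : (3 * (s + 2) - 2 = 3 * s + 4)%N); last lia.
  rewrite (_ : (3 * s.+1 + 1 = 3 * s + 4)%N); last lia.
  rewrite (_ : (4 * (p.+2 - (s + 2) + 1) = 4 * (p.+1 - s.+1) + 4)%N); last lia.
  by rewrite natrD mulrDl.
have hA : (2 * (2 * p.+2 - 2))%N%:R *: 'X = Z1 p 0 :> {poly int}.
  rewrite sc /Z1 muln0 add0n expr1; congr (_%:R * _); lia.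
have hE : 4%:R *: 'X^(3 * p.+2 - 2) = Z4 p :> {poly int}.
  rewrite /Z4 (_ : (3 * p.+2 - 2 = 3 * p + 4)%N); last lia.
  by rewrite sc.
rewrite hA hB hC hD hE !big_split /= [\sum_(0 <= s < p.+1) Z1 p s]big_nat_recl // [\sum_(0 <= s < p.+1) Z4 s]big_nat_recr //=.
ring.
Qed.

Theorem theorem2p2 (n : nat) (hn : (2 <= n)%N) :
  base_poly (phen_adj n) 2 3 =
    (2 * (2 * n - 2))%N%:R *: 'X
    + \sum_(2 <= k < n) (4 * (n - k + 1))%N%:R *: 'X^(3 * k - 2)
    + \sum_(1 <= k < n) (4 * (2 * n - 2 * k + 1))%N%:R *: 'X^(3 * k - 1)
    + \sum_(1 <= k < n) (4 * (n - k + 2))%N%:R *: 'X^(3 * k)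
    + 4%:R *: 'X^(3 * n - 2).
Proof.
case: n hn => [|[|p]] // _.
by rewrite base_Q Q_eq //= LHS_Z RHS_Z.
Qed.
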